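(* There is a geodesic coarse median space $(X,d,\mu)$ of rank $2$ such that for every $C\geqslant0$ there exist $a,b\in X$ with the property that no geodesic connecting $a$ and $b$ lies within Hausdorff distance $C$ of the interval $[a,b]$.
   Context: Write $x\sim_s y$ if $d(x,y)\leqslant s$. A coarse median space is a triple $(X,d,\mu)$ with $(X,d)$ a metric space and $\mu\colon X^3\to X$ satisfying: (M1) $\mu(a,a,b)=a$; (M2) $\mu(a_1,a_2,a_3)$ is invariant under permutations of its arguments; (C1) there is an affine $\rho(t)=Kt+H_0$ with $d(\mu(a,b,c),\mu(a',b',c'))\leqslant\rho(d(a,a')+d(b,b')+d(c,c'))$ for all points; (C2) there is $H\colon\mathbb N\to[0,\infty)$ such that for every finite $A\subseteq X$ with $1\leqslant|A|\leqslant p$ there are a finite median algebra $(\Pi,\mu_\Pi)$ and maps $\pi\colon A\to\Pi$, $\lambda\colon\Pi\to X$ with $\lambda\mu_\Pi(x,y,z)\sim_{H(p)}\mu(\lambda x,\lambda y,\lambda z)$ for all $x,y,z\in\Pi$ and $\lambda\pi a\sim_{H(p)}a$ for all $a\in A$. (A median algebra is a set with a ternary operation $m$ satisfying $m(a,a,b)=a$, full symmetry, and $m(m(a,b,c),b,d)=m(a,b,m(c,b,d))$.) The rank of a median algebra is the supremum of $k$ such that it contains a subalgebra isomorphic to $I^k=(\mathbb Z_2)^k$ with coordinatewise majority vote as median. The coarse median space has rank at most $n$ if there exist $\rho,H$ as in (C1),(C2) for which $\Pi$ in (C2) can always be chosen of rank at most $n$; its rank is the least such $n$. The interval is $[a,b]=\{\mu(a,y,b):y\in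 X\}$. *)

(* Defs.v *)
From Stdlib Require Import Reals List.
From mathcomp Require Import all_boot.

Set Implicit Arguments.
Unset Strict Implicit.
Unset Printing Implicit Defensive.

Local Open Scope R_scope.

Definition is_metric (X : Type) (d : X -> X -> R) : Prop :=
  (forall x y, 0 <= d x y) /\
  (forall x y, d x y = 0 <-> x = y) /\
  (forall x y, d x y = d y x) /\
  (forall x y z, d x z <= d x y + d y z).

Definition geodesic_between (X : Type) (d : X -> X -> R) (a b : X)
    (L : R) (g : R -> X) : Prop :=
  0 <= L /\ g 0 = a /\ g L = b /\
  (forall s t, 0 <= s <= L -> 0 <= t <= L -> d (g s) (g t) = Rabs (s - t)).

Definition geodesic_space (X : Type) (d : X -> X -> R) : Prop :=
  forall a b, exists (L : R) (g : R -> X), geodesic_between d a b L g.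

Definition geodesic_image (X : Type) (L : R) (g : R -> X) : X -> Prop :=
  fun z => exists t, 0 <= t <= L /\ z = g t.

Definition hausdorff_le (X : Type) (d : X -> X -> R) (A B : X -> Prop) (C : R)
    : Prop :=
  (forall x, A x -> forall eps, 0 < eps -> exists y, B y /\ d x y <= C + eps) /\
  (forall y, B y -> forall eps, 0 < eps -> exists x, A x /\ d y x <= C + eps).

Definition is_median_algebra (P : Type) (m : P -> P -> P -> P) : Prop :=
  (forall a b, m a a b = a) /\
  (forall a b c, m a b c = m b a c /\ m a b c = m a c b) /\
  (forall a b c e, m (m a b c) b e = m a b (m c b e)).

Definition cube (k : nat) : finType := {ffun 'I_k -> bool}.

Definition majority (x y z : bool) : bool := [|| x && y, y && z | x && z].

Definition cube_median (k : nat) (x y z : cube k) : cube k :=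
  [ffun i => majority (x i) (y i) (z i)].

Definition median_hom (P Q : Type) (mP : P -> P -> P -> P)
    (mQ : Q -> Q -> Q -> Q) (f : P -> Q) : Prop :=
  forall x y z, f (mP x y z) = mQ (f x) (f y) (f z).

(* rank at most n: every subalgebra isomorphic to I^k (= image of an
   injective median homomorphism I^k -> P) has k <= n *)
Definition median_rank_le (P : Type) (m : P -> P -> P -> P) (n : nat) : Prop :=
  forall (k : nat) (f : cube k -> P),
    injective f -> median_hom (@cube_median k) m f -> (k <= n)%N.

Definition median_axioms (X : Type) (mu : X -> X -> X -> X) : Prop :=
  (forall a b, mu a a b = a) /\
  (forall a b c, mu a b c = mu b a c /\ mu a b c = mu a c b).

(* (C1) with rho(t) = K t + H0 *)
Definition cm_C1 (X : Type) (d : X -> X -> R) (mu : X -> X -> X -> X)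
    (K H0 : R) : Prop :=
  forall a b c a' b' c',
    d (mu a b c) (mu a' b' c') <= K * (d a a' + d b b' + d c c') + H0.

Definition cm_C2 (X : Type) (d : X -> X -> R) (mu : X -> X -> X -> X)
    (H : nat -> R) (ok : forall P : finType, (P -> P -> P -> P) -> Prop) : Prop :=
  (forall p, 0 <= H p) /\
  forall (p : nat) (A : list X), NoDup A ->
    (1 <= length A)%nat -> (length A <= p)%nat ->
    exists (Pi : finType) (mPi : Pi -> Pi -> Pi -> Pi) (pi : X -> Pi) (lam : Pi -> X),
      is_median_algebra mPi /\ ok Pi mPi /\
      (forall x y z, d (lam (mPi x y z)) (mu (lam x) (lam y) (lam z)) <= H p) /\
      (forall a, In a A -> d (lam (pi a)) a <= H p).

Definition coarse_median_space (X : Type) (d : X -> X -> R)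
    (mu : X -> X -> X -> X) : Prop :=
  is_metric d /\ median_axioms mu /\
  exists (K H0 : R) (H : nat -> R),
    cm_C1 d mu K H0 /\ cm_C2 d mu H (fun _ _ => True).

Definition coarse_median_rank_le (X : Type) (d : X -> X -> R)
    (mu : X -> X -> X -> X) (n : nat) : Prop :=
  coarse_median_space d mu /\
  exists (K H0 : R) (H : nat -> R),
    cm_C1 d mu K H0 /\ cm_C2 d mu H (fun P m => median_rank_le m n).

Definition coarse_median_rank (X : Type) (d : X -> X -> R)
    (mu : X -> X -> X -> X) (n : nat) : Prop :=
  coarse_median_rank_le d mu n /\
  forall m, coarse_median_rank_le d mu m -> (n <= m)%N.

Definition cm_interval (X : Type) (mu : X -> X -> X -> X) (a b : X) : X -> Prop :=
  fun z => exists y, z = mu a y b.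

(* Main.v *)
Require Import Defs.
From Stdlib Require Import Reals Lra.
From mathcomp Require Import all_boot.
From mathcomp Require Import Rstruct.
Local Open Scope R_scope.
Definition med (x y z : R) : R := Rmax (Rmin x y) (Rmin (Rmax x y) z).

Ltac dec := unfold med, Rmax, Rmin in *;
  repeat match goal with |- context [Rle_dec ?a ?b] => destruct (Rle_dec a b)
                       | H : context [Rle_dec ?a ?b] |- _ => destruct (Rle_dec a b) end;
  try lra.

Lemma med_aab a b : med a a b = a. Proof. dec. Qed.
Lemma med_s1 a b c : med a b c = med b a c. Proof. dec. Qed.
Lemma med_s2 a b c : med a b c = med a c b. Proof. dec. Qed.
Lemma med_assoc a b c e : med (med a b c) b e = med a b (med c b e).
Proof. dec. Qed.
Lemma med_rot a b c : med a b c = med c a b. Proof. dec. Qed.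
Lemma med_in a b c : med a b c = a \/ med a b c = b \/ med a b c = c.
Proof. dec. Qed.
Lemma med_lip a a' b c : Rabs (med a b c - med a' b c) <= Rabs (a - a').
Proof. unfold Rabs; repeat match goal with |- context [Rcase_abs ?a] => destruct (Rcase_abs a) end; dec. Qed.
Lemma med_square p q r s :
  med p q r = p -> med q p s = q -> med r p s = r -> med s q r = s -> q = p \/ r = p.
Proof. intros H1 H2 H3 H4. revert H1 H2 H3 H4. dec. Qed.

Definition dd (p q : R * R) : R := Rabs (p.1 - q.1) + Rabs (p.2 - q.2).
Definition mu (p q r : R * R) : R * R := (med p.1 q.1 r.1, med p.2 q.2 r.2).

Ltac rab := unfold Rabs in *;
  repeat match goal with |- context [Rcase_abs ?a] => destruct (Rcase_abs a)
                       | H : context [Rcase_abs ?a] |- _ => destruct (Rcase_abs a) end;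
  try lra.

Lemma dd_metric : is_metric dd.
Proof.
split; [|split; [|split]].
- move=> x y; rewrite /dd; have := Rabs_pos (x.1 - y.1); have := Rabs_pos (x.2 - y.2); lra.
- move=> [x1 x2] [y1 y2]; rewrite /dd /=; split.
  + move=> H; have h1 : x1 = y1 by rab. have h2 : x2 = y2 by rab. by rewrite h1 h2.
  + case=> -> ->; rewrite !Rminus_diag Rabs_R0; lra.
- move=> x y; rewrite /dd; rewrite (Rabs_minus_sym x.1) (Rabs_minus_sym x.2); lra.
- move=> x y z; rewrite /dd.
  have := Rabs_triang (x.1 - y.1) (y.1 - z.1); have := Rabs_triang (x.2 - y.2) (y.2 - z.2).
  have -> : x.1 - y.1 + (y.1 - z.1) = x.1 - z.1 by lra.
  have -> : x.2 - y.2 + (y.2 - z.2) = x.2 - z.2 by lra. lra.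
Qed.

Lemma dd_sym x y : dd x y = dd y x.
Proof. by case: dd_metric => _ [_ [H _]]. Qed.
Lemma dd_tri x y z : dd x z <= dd x y + dd y z.
Proof. by case: dd_metric => _ [_ [_ H]]. Qed.
Lemma dd_pos x y : 0 <= dd x y.
Proof. by case: dd_metric => H _. Qed.
Lemma dd_refl x : dd x x = 0.
Proof. case: dd_metric => _ [H _]. by apply/H. Qed.

Lemma med_lip3 a b c a' b' c' :
  Rabs (med a b c - med a' b' c') <= Rabs (a - a') + Rabs (b - b') + Rabs (c - c').
Proof.
have h1 := med_lip a a' b c.
have h2 := med_lip b b' a' c. rewrite (med_s1 b) (med_s1 b') in h2.
have h3 := med_lip c c' a' b'. rewrite -(med_rot a' b' c) -(med_rot a' b' c') in h3.
have := Rabs_triang (med a b c - med a' b c) (med a' b c - med a' b' c).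
have := Rabs_triang (med a b c - med a' b c + (med a' b c - med a' b' c)) (med a' b' c - med a' b' c').
have -> : med a b c - med a' b c + (med a' b c - med a' b' c) + (med a' b' c - med a' b' c')
   = med a b c - med a' b' c' by lra.
lra.
Qed.

Lemma mu_C1 : cm_C1 dd mu 1 0.
Proof.
move=> a b c a' b' c'; rewrite /dd /mu /=.
have := med_lip3 a.1 b.1 c.1 a'.1 b'.1 c'.1.
have := med_lip3 a.2 b.2 c.2 a'.2 b'.2 c'.2. lra.
Qed.

Definition clamp (L s : R) : R := Rmax 0 (Rmin L s).
Definition sg (x y : R) : R := if Rle_dec x y then 1 else -1.
Definition mv (x y s : R) : R := x + sg x y * clamp (Rabs (y - x)) s.

Lemma mv_diff x y s t : Rabs (mv x y s - mv x y t) = Rabs (clamp (Rabs (y - x)) s - clamp (Rabs (y - x)) t).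
Proof.
rewrite /mv /sg.
have -> : forall u v w : R, x + u * v - (x + u * w) = u * (v - w) by move=> *; ring.
rewrite Rabs_mult; case: (Rle_dec x y) => hxy.
- rewrite Rabs_R1; ring.
- rewrite Rabs_Ropp Rabs_R1; ring.
Qed.

Ltac dec2 := unfold Rabs, Rmax, Rmin in *;
  repeat match goal with |- context [Rle_dec ?a ?b] => destruct (Rle_dec a b)
                       | H : context [Rle_dec ?a ?b] |- _ => destruct (Rle_dec a b)
                       | |- context [Rcase_abs ?a] => destruct (Rcase_abs a)
                       | H : context [Rcase_abs ?a] |- _ => destruct (Rcase_abs a) end;
  simpl in *; try lra.

Lemma mv0 x y s : s <= 0 -> mv x y s = x.
Proof. move=> hs; rewrite /mv /clamp /sg; dec2. Qed.

Lemma mvL x y s : Rabs (y - x) <= s -> mv x y s = y.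
Proof. move=> hs; rewrite /mv /clamp /sg; dec2. Qed.

Lemma clamp_key L1 L2 s t : 0 <= L1 -> 0 <= L2 -> 0 <= s -> s <= t -> t <= L1 + L2 ->
  Rabs (clamp L1 s - clamp L1 t) + Rabs (clamp L2 (s - L1) - clamp L2 (t - L1)) = Rabs (s - t).
Proof.
move=> *; rewrite /clamp; dec2.
Qed.

Lemma geo_space : geodesic_space dd.
Proof.
move=> a b.
set L1 := Rabs (b.1 - a.1); set L2 := Rabs (b.2 - a.2).
exists (L1 + L2), (fun t => (mv a.1 b.1 t, mv a.2 b.2 (t - L1))).
have h1 : 0 <= L1 by apply: Rabs_pos.
have h2 : 0 <= L2 by apply: Rabs_pos.
split; first lra.
split. { rewrite mv0 ?mv0; try lra. by case: a {L1 L2 h1 h2}. }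
split. { rewrite mvL ?mvL; rewrite -/L1 -/L2; try lra. by case: b {L1 L2 h1 h2}. }
move=> s t hs ht; rewrite /dd /= !mv_diff -/L1 -/L2.
case: (Rle_dec s t) => hst.
- apply: clamp_key; lra.
- rewrite (Rabs_minus_sym (clamp L1 s)) (Rabs_minus_sym (clamp L2 (s - L1))) (Rabs_minus_sym s).
  apply: clamp_key; lra.
Qed.

Lemma In_mem (T : eqType) (x : T) (s : seq T) : List.In x s -> x \in s.
Proof. elim: s => //= y s IH [->|h]; rewrite inE; first by rewrite eqxx. by rewrite IH ?orbT. Qed.

Lemma mu_aab a b : mu a a b = a.
Proof. by case: a => a1 a2; rewrite /mu /= !med_aab. Qed.
Lemma mu_s1 a b c : mu a b c = mu b a c.
Proof. by rewrite /mu med_s1 (med_s1 a.2). Qed.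
Lemma mu_s2 a b c : mu a b c = mu a c b.
Proof. by rewrite /mu med_s2 (med_s2 a.2). Qed.
Lemma mu_assoc a b c e : mu (mu a b c) b e = mu a b (mu c b e).
Proof. by rewrite /mu /= med_assoc (med_assoc a.2). Qed.

Lemma med_mem (s : seq R) a b c : a \in s -> b \in s -> c \in s -> med a b c \in s.
Proof. by move=> ha hb hc; case: (med_in a b c) => [->|[->|->]]. Qed.

Section Grid.
Variable A : seq (R * R).
Definition grid := [seq (x, y) | x <- map fst A, y <- map snd A].
Lemma grid_med u v w : u \in grid -> v \in grid -> w \in grid -> mu u v w \in grid.
Proof.
move=> /allpairsP [[u1 u2] [/= hu1 hu2 ->]].
move=> /allpairsP [[v1 v2] [/= hv1 hv2 ->]].
move=> /allpairsP [[w1 w2] [/= hw1 hw2 ->]].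
by rewrite /mu /=; apply: allpairs_f; apply: med_mem.
Qed.
Lemma grid_A a : a \in A -> a \in grid.
Proof. by case: a => a1 a2 h; apply: allpairs_f; apply/mapP; exists (a1, a2). Qed.

Definition Pi : finType := seq_sub grid.
Definition mPi (x y z : Pi) : Pi := insubd x (mu (val x) (val y) (val z)).
Lemma val_mPi x y z : val (mPi x y z) = mu (val x) (val y) (val z).
Proof. by rewrite /mPi insubdK //; apply: grid_med; apply: valP. Qed.

Lemma mPi_median : is_median_algebra mPi.
Proof.
split; [|split].
- by move=> a b; apply: val_inj; rewrite val_mPi mu_aab.
- move=> a b c; split; apply: val_inj; rewrite !val_mPi; [exact: mu_s1 | exact: mu_s2].
- by move=> a b c e; apply: val_inj; rewrite !val_mPi mu_assoc.
Qed.
End Grid.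

Definition z0 k : cube k := [ffun _ => false].
Definition ei {k} (i : 'I_k) : cube k := [ffun l => l == i].
Definition eij {k} (i j : 'I_k) : cube k := [ffun l => (l == i) || (l == j)].

Lemma cm1 k (i j : 'I_k) : i != j -> cube_median (z0 k) (ei i) (ei j) = z0 k.
Proof. move=> ij; apply/ffunP => l; rewrite !ffunE /majority /=.
case: (eqVneq l i) => [->|li]; first by rewrite (negbTE ij) /=.
by []. Qed.
Lemma cm2 k (i j : 'I_k) : i != j -> cube_median (ei i) (z0 k) (eij i j) = ei i.
Proof. move=> ij; apply/ffunP => l; rewrite !ffunE /majority /=.
by case: (l == i); case: (l == j). Qed.
Lemma cm3 k (i j : 'I_k) : i != j -> cube_median (ei j) (z0 k) (eij i j) = ei j.
Proof. move=> ij; apply/ffunP => l; rewrite !ffunE /majority /=.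
by case: (l == i); case: (l == j). Qed.
Lemma cm4 k (i j : 'I_k) : i != j -> cube_median (eij i j) (ei i) (ei j) = eij i j.
Proof. move=> ij; apply/ffunP => l; rewrite !ffunE /majority /=.
by case: (l == i); case: (l == j). Qed.

Lemma logic3 (a0 a1 a2 b0 b1 b2 : Prop) : (a0\/a1)->(a0\/a2)->(a1\/a2)->(b0\/b1)->(b0\/b2)->(b1\/b2)->
  (a0/\b0)\/(a1/\b1)\/(a2/\b2).
Proof. tauto. Qed.

Lemma rank2 A : median_rank_le (@mPi A) 2.
Proof.
move=> k f finj fhom; rewrite leqNgt; apply/negP => hk.
pose g v := val (f v).
have ghom : forall u v w, g (cube_median u v w) = mu (g u) (g v) (g w).
  by move=> u v w; rewrite /g fhom val_mPi.
have key : forall i j : 'I_k, i != j ->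
   ((g (ei i)).1 = (g (z0 k)).1 \/ (g (ei j)).1 = (g (z0 k)).1) /\
   ((g (ei i)).2 = (g (z0 k)).2 \/ (g (ei j)).2 = (g (z0 k)).2).
  move=> i j ij.
  have h1 : g (z0 k) = mu (g (z0 k)) (g (ei i)) (g (ei j)) by rewrite -ghom cm1.
  have h2 : g (ei i) = mu (g (ei i)) (g (z0 k)) (g (eij i j)) by rewrite -ghom cm2.
  have h3 : g (ei j) = mu (g (ei j)) (g (z0 k)) (g (eij i j)) by rewrite -ghom cm3.
  have h4 : g (eij i j) = mu (g (eij i j)) (g (ei i)) (g (ei j)) by rewrite -ghom cm4.
  split; apply: (med_square _ _ _ (_ (g (eij i j)))).
  + by rewrite {2}h1.
  + by rewrite {2}h2.
  + by rewrite {2}h3.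
  + by rewrite {2}h4.
  + by rewrite {2}h1.
  + by rewrite {2}h2.
  + by rewrite {2}h3.
  + by rewrite {2}h4.
have k0 : (0 < k)%N by apply: leq_ltn_trans hk.
have k1 : (1 < k)%N by apply: leq_ltn_trans hk.
pose i0 : 'I_k := Ordinal k0. pose i1 : 'I_k := Ordinal k1. pose i2 : 'I_k := Ordinal hk.
have [a01 b01] := key i0 i1 isT.
have [a02 b02] := key i0 i2 isT.
have [a12 b12] := key i1 i2 isT.
have fin : forall i : 'I_k, (g (ei i)).1 = (g (z0 k)).1 -> (g (ei i)).2 = (g (z0 k)).2 -> False.
  move=> i e1 e2.
  have : g (ei i) = g (z0 k) by rewrite (surjective_pairing (g (ei i))) e1 e2 -surjective_pairing.
  move=> /val_inj /finj /ffunP /(_ i); by rewrite !ffunE eqxx.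
case: (logic3 _ _ _ _ _ _ a01 a02 a12 b01 b02 b12) => [[]|[[]|[]]]; apply: fin.
Qed.

Lemma C2_rank2 : cm_C2 dd mu (fun _ => 0) (fun P m => median_rank_le m 2).
Proof.
split; first by move=> _; lra.
move=> p [|a0 A'] hnd hl hp; first by [].
have a0g : a0 \in grid (a0 :: A') by apply: grid_A; rewrite inE eqxx.
pose u0 : Pi (a0 :: A') := Sub a0 a0g.
exists (Pi (a0 :: A')), (@mPi (a0 :: A')), (insubd u0), val.
split; first exact: mPi_median.
split; first exact: rank2.
split.
- move=> x y z; rewrite val_mPi dd_refl; lra.
- move=> a /In_mem ha; rewrite insubdK ?dd_refl; [lra | exact: grid_A].
Qed.

Section Sq.
Variables (P : Type) (m : P -> P -> P -> P).
Hypothesis Hm : is_median_algebra m.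
Lemma M1 a b : m a a b = a. Proof. by case: Hm. Qed.
Lemma S1 a b c : m a b c = m b a c. Proof. by case: Hm => _ [/(_ a b c) []]. Qed.
Lemma S2 a b c : m a b c = m a c b. Proof. by case: Hm => _ [/(_ a b c) []]. Qed.
Lemma M3 a b c e : m (m a b c) b e = m a b (m c b e). Proof. by case: Hm => _ [_ ->]. Qed.
Lemma Mj2 a b : m a b a = a. Proof. by rewrite S2 M1. Qed.
Lemma Mj3 a b : m b a a = a. Proof. by rewrite S1 Mj2. Qed.
Lemma perm6 p q r s : m p q r = s ->
  m p r q = s /\ m q p r = s /\ m q r p = s /\ m r p q = s /\ m r q p = s.
Proof. move=> h; do !split; rewrite -h.
- by rewrite S2.
- by rewrite S1.
- by rewrite S2 S1.
- by rewrite S1 S2.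
- by rewrite S1 S2 S1.
Qed.
Lemma Fint a b c : m a (m a b c) c = m a b c.
Proof. by rewrite S1 (S1 a b c) M3 Mj2. Qed.

Lemma square a b c e :
  let x := m a b c in let y := m a e c in let w := m a x y in let z := m c x y in
  [/\ m w x y = w, m x w z = x, m y w z = y & m z x y = z].
Proof.
move=> x y w z.
have Fx : m a x c = x by apply: Fint.
have Fy : m a y c = y by apply: Fint.
have i1 : m w x y = w by rewrite /w M3 Mj2.
have i4 : m z x y = z by rewrite /z M3 Mj2.
have zz : m x z y = z by rewrite (S1 x z y).
split => //.
- rewrite (S1 x w z) /w M3 (S1 y x z) (S2 x y z) zz /z -M3 Fx M1 //.
- rewrite (S1 y w z) /w (S2 a x y) M3 (S2 x y z) zz /z (S2 c x y) -M3 Fy M1 //.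
Qed.
End Sq.

Lemma step Kp H0p h Ea Eb Ec (lm ma mb mc pa pb pc t : R * R) :
  0 <= Kp ->
  (forall a b c a' b' c', dd (mu a b c) (mu a' b' c') <= Kp * (dd a a' + dd b b' + dd c c') + H0p) ->
  dd lm (mu ma mb mc) <= h -> dd ma pa <= Ea -> dd mb pb <= Eb -> dd mc pc <= Ec ->
  mu pa pb pc = t -> dd lm t <= h + Kp * (Ea + Eb + Ec) + H0p.
Proof.
move=> K0 C hl ha hb hc ht.
have := C ma mb mc pa pb pc; rewrite ht => h2.
have := dd_tri lm (mu ma mb mc) t.
have : Kp * (dd ma pa + dd mb pb + dd mc pc) <= Kp * (Ea + Eb + Ec).
  apply: Rmult_le_compat_l => //; lra.
lra.
Qed.

Arguments step {Kp H0p h Ea Eb Ec lm ma mb mc pa pb pc t}.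

Lemma sep (T : Type) (lam : T -> R * R) u v p q Eu Ev :
  dd (lam u) p <= Eu -> dd (lam v) q <= Ev -> Eu + Ev < dd p q -> u <> v.
Proof.
move=> hu hv hlt e; subst v.
have := dd_tri p (lam u) q; rewrite (dd_sym p (lam u)); lra.
Qed.

Arguments sep {T lam u v p q Eu Ev}.

Definition o1 : 'I_2 := Ordinal (isT : (1 < 2)%N).

Lemma cube2_ext (u v : cube 2) : u ord0 = v ord0 -> u o1 = v o1 -> u = v.
Proof.
move=> h0 h1; apply/ffunP => -[[|[|i]] Hi].
- by rewrite (_ : Ordinal Hi = ord0) //; apply: val_inj.
- by rewrite (_ : Ordinal Hi = o1) //; apply: val_inj.
- by [].
Qed.

Lemma lower (mm : nat) K H0 (H : nat -> R) :
  cm_C1 dd mu K H0 -> cm_C2 dd mu H (fun P m0 => median_rank_le m0 mm) -> (2 <= mm)%N.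
Proof.
move=> hC1 [Hpos hC2].
set h := H 4%N. have hh : 0 <= h := Hpos 4%N.
set Kp := Rabs K. set H0p := Rabs H0.
have Kp0 : 0 <= Kp by apply: Rabs_pos.
have H0p0 : 0 <= H0p by apply: Rabs_pos.
have C1' : forall a b c a' b' c', dd (mu a b c) (mu a' b' c') <= Kp * (dd a a' + dd b b' + dd c c') + H0p.
  move=> a b c a' b' c'.
  have := hC1 a b c a' b' c'.
  have s0 : 0 <= dd a a' + dd b b' + dd c c'.
    have := dd_pos a a'; have := dd_pos b b'; have := dd_pos c c'; lra.
  have : K * (dd a a' + dd b b' + dd c c') <= Kp * (dd a a' + dd b b' + dd c c').
    apply: Rmult_le_compat_r => //; apply: Rle_abs.
  have := Rle_abs H0. rewrite -/H0p. lra.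
set E1 := h + Kp * (h + h + h) + H0p.
set E2 := h + Kp * (h + E1 + E1) + H0p.
have E10 : 0 <= E1.
  have : 0 <= Kp * (h + h + h) by apply: Rmult_le_pos => //; lra. rewrite /E1; lra.
have E20 : 0 <= E2.
  have : 0 <= Kp * (h + E1 + E1) by apply: Rmult_le_pos => //; lra. rewrite /E2; lra.
set n := 2 * (E1 + E2) + 1.
have n0 : 0 < n by rewrite /n; lra.
pose P00 := (0, 0). pose P10 := (n, 0). pose P11 := (n, n). pose P01 := (0, n).
have nd : List.NoDup [:: P00; P10; P11; P01].
  have nn : n <> 0 by lra.
  repeat constructor; rewrite /P00 /P10 /P11 /P01 /=;
  intuition; repeat match goal with H : (_, _) = (_, _) |- _ => case: H => * end; lra.
have [Pi [mP [pi [lam [Hma [Hrk [Hq Hpi]]]]]]] := hC2 4%N _ nd isT isT.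
rewrite -/h in Hq.
set a := pi P00. set b := pi P10. set c := pi P11. set e := pi P01.
have la : dd (lam a) P00 <= h by apply: Hpi; rewrite /=; tauto.
have lb : dd (lam b) P10 <= h by apply: Hpi; rewrite /=; tauto.
have lc : dd (lam c) P11 <= h by apply: Hpi; rewrite /=; tauto.
have le : dd (lam e) P01 <= h by apply: Hpi; rewrite /=; tauto.
have := @square _ _ Hma a b c e.
set x := mP a b c. set y := mP a e c. set w := mP a x y. set z := mP c x y.
case=> f1 f2 f3 f4.
have lx : dd (lam x) P10 <= E1.
  rewrite ?/E1 ?/E2; apply: (step Kp0 C1' (Hq a b c) la lb lc).
  rewrite /mu /P00 /P10 /P11 /=; congr pair; dec.
have ly : dd (lam y) P01 <= E1.
  rewrite ?/E1 ?/E2; apply: (step Kp0 C1' (Hq a e c) la le lc).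
  rewrite /mu /P00 /P01 /P11 /=; congr pair; dec.
have lw : dd (lam w) P00 <= E2.
  rewrite ?/E1 ?/E2; apply: (step Kp0 C1' (Hq a x y) la lx ly).
  rewrite /mu /P00 /P01 /P10 /=; congr pair; dec.
have lz : dd (lam z) P11 <= E2.
  rewrite ?/E1 ?/E2; apply: (step Kp0 C1' (Hq c x y) lc lx ly).
  rewrite /mu /P11 /P01 /P10 /=; congr pair; dec.
have hn : n = 2 * (E1 + E2) + 1 by [].
have nwx : w <> x by apply: (sep lw lx); rewrite /dd /P00 /P10 /=; rab.
have nwy : w <> y by apply: (sep lw ly); rewrite /dd /P00 /P01 /=; rab.
have nwz : w <> z by apply: (sep lw lz); rewrite /dd /P00 /P11 /=; rab.
have nxy : x <> y by apply: (sep lx ly); rewrite /dd /P10 /P01 /=; rab.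
have nxz : x <> z by apply: (sep lx lz); rewrite /dd /P10 /P11 /=; rab.
have nyz : y <> z by apply: (sep ly lz); rewrite /dd /P01 /P11 /=; rab.
pose f (v : cube 2) := if v ord0 then (if v o1 then z else x) else (if v o1 then y else w).
have finj : injective f.
  move=> u v; rewrite /f.
  case E0: (u ord0); case E1': (u o1); case F0: (v ord0); case F1: (v o1) => HH;
  try (apply: cube2_ext; congruence);
  exfalso; first [exact: nwx HH | exact: nwy HH | exact: nwz HH | exact: nxy HH | exact: nxz HH | exact: nyz HH
   | exact: nwx (esym HH) | exact: nwy (esym HH) | exact: nwz (esym HH) | exact: nxy (esym HH) | exact: nxz (esym HH) | exact: nyz (esym HH)].
have fhom : median_hom (@cube_median 2) mP f.
  have [g1 [g2 [g3 [g4 g5]]]] := @perm6 _ _ Hma _ _ _ _ f1.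
  have [h1 [h2 [h3 [h4 h5]]]] := @perm6 _ _ Hma _ _ _ _ f2.
  have [k1 [k2 [k3 [k4 k5]]]] := @perm6 _ _ Hma _ _ _ _ f3.
  have [l1 [l2 [l3 [l4 l5]]]] := @perm6 _ _ Hma _ _ _ _ f4.
  have j1 := @M1 _ _ Hma. have j2 := @Mj2 _ _ Hma. have j3 := @Mj3 _ _ Hma.
  move=> u v t; rewrite /f !ffunE /majority.
  case: (u ord0); case: (u o1); case: (v ord0); case: (v o1); case: (t ord0); case: (t o1) => /=;
  symmetry; first [apply: j1 | apply: j2 | apply: j3 | assumption].
have := Hrk 2%N f finj fhom. done.
Qed.

Lemma cms : coarse_median_space dd mu.
Proof.
split; first exact: dd_metric.
split; first by split; [exact: mu_aab | move=> a b c; split; [exact: mu_s1 | exact: mu_s2]].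
exists 1, 0, (fun _ => 0); split; first exact: mu_C1.
have [h0 h] := C2_rank2; split => // p A nd l1 l2.
have [Pi [mP [pi [lam [? [? ?]]]]]] := h p A nd l1 l2.
by exists Pi, mP, pi, lam.
Qed.

Lemma far C : 0 <= C ->
  exists a b : R * R,
    forall (L : R) (g : R -> R * R), geodesic_between dd a b L g ->
      ~ hausdorff_le dd (geodesic_image L g) (cm_interval mu a b) C.
Proof.
move=> C0; set N := 2 * C + 2.
exists (0, 0), (N, N) => L g [L0 [g0 [gL gi]]] [_ hH].
have eL : L = 2 * N.
  have h := gi 0 L; rewrite g0 gL /dd /= in h.
  have : 0 <= 0 <= L by lra. have : 0 <= L <= L by lra. move=> p1 p2; move: (h p2 p1).
  rewrite /N; rab.
have [x1 [[t1 [ht1 ->]] d1]] : exists x, geodesic_image L g x /\ dd (N, 0) x <= C + 1/2.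
  apply: hH; try lra. exists (N, 0); rewrite /mu /=; congr pair; rewrite /N; dec.
have [x2 [[t2 [ht2 ->]] d2]] : exists x, geodesic_image L g x /\ dd (0, N) x <= C + 1/2.
  apply: hH; try lra. exists (0, N); rewrite /mu /=; congr pair; rewrite /N; dec.
have a1 : dd (0, 0) (g t1) = t1 by rewrite -g0 gi; [rab | lra | lra].
have a2 : dd (0, 0) (g t2) = t2 by rewrite -g0 gi; [rab | lra | lra].
have b1 : dd (g t1) (N, N) = L - t1 by rewrite -gL gi; [rab | lra | lra].
have b2 : dd (g t2) (N, N) = L - t2 by rewrite -gL gi; [rab | lra | lra].
have c12 : dd (g t1) (g t2) = Rabs (t1 - t2) by rewrite gi; lra.
have e1 := dd_tri (0, 0) (g t1) (N, 0).
have e2 := dd_tri (N, 0) (g t1) (N, N).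
have e3 := dd_tri (0, 0) (g t2) (0, N).
have e4 := dd_tri (0, N) (g t2) (N, N).
have e5 := dd_tri (N, 0) (g t1) (0, N).
have e6 := dd_tri (g t1) (g t2) (0, N).
rewrite (dd_sym (g t1) (N, 0)) in e1.
rewrite (dd_sym (g t2) (0, N)) in e3 e6.
have k1 : dd (0, 0) (N, 0) = N by rewrite /dd /= /N; rab.
have k2 : dd (N, 0) (N, N) = N by rewrite /dd /= /N; rab.
have k3 : dd (0, 0) (0, N) = N by rewrite /dd /= /N; rab.
have k4 : dd (0, N) (N, N) = N by rewrite /dd /= /N; rab.
have k5 : dd (N, 0) (0, N) = 2 * N by rewrite /dd /= /N; rab.
rewrite a1 a2 b1 b2 c12 k1 k2 k3 k4 k5 in e1 e2 e3 e4 e5 e6.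
have hN : N = 2 * C + 2 by [].
move: e1 e2 e3 e4 e5 e6 {k1 k2 k3 k4 k5 gi hH}; rab.
Qed.

Theorem theorem5p1 :
  exists (X : Type) (d : X -> X -> R) (mu : X -> X -> X -> X),
    geodesic_space d /\ coarse_median_space d mu /\ coarse_median_rank d mu 2 /\
    forall C : R, 0 <= C ->
      exists a b : X,
        forall (L : R) (g : R -> X), geodesic_between d a b L g ->
          ~ hausdorff_le d (geodesic_image L g) (cm_interval mu a b) C.
Proof.
exists (R * R)%type, dd, mu.
split; first exact: geo_space.
split; first exact: cms.
split; last exact: far.
split.
- split; first exact: cms.
  exists 1, 0, (fun _ => 0); split; [exact: mu_C1 | exact: C2_rank2].
- move=> m [_ [K [H0 [H [c1 c2]]]]]; exact: lower c1 c2.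
Qed.
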